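(* Let $F\in\mathbb{R}[x_1,\dots,x_n]$ be a form of degree $d$ with $F(X)>0$ for all $X\in\mathbb{T}_n=\{(x_1,\dots,x_n): x_i\ge0,\ \sum_i x_i=1\}$. Then there exists $M$ such that for every $m\ge M$ and every choice of $B_{[\alpha_1]},\dots,B_{[\alpha_m]}\in PW_n$, the form $F(B_{[\alpha_1]}\cdots B_{[\alpha_m]}X^{\mathrm{Tr}})$ is nonlacunary and trivially positive, i.e., every monomial $x_1^{i_1}\cdots x_n^{i_n}$ with $i_1+\cdots+i_n=d$ occurs in it with a strictly positive coefficient.
   Context: $W_n$ is the $n\times n$ matrix with $(W_n)_{ij}=1/j$ for $i\le j$ and $0$ for $i>j$. For a permutation $[k_1\cdots k_n]$ of $1,\dots,n$, $P_{[k_1\cdots k_n]}$ is the permutation matrix with $1$ in positions $(i,k_i)$ and $0$ elsewhere, and $B_{[k_1\cdots k_n]}=P_{[k_1\cdots k_n]}W_n$; $PW_n$ denotes the set of these $n!$ matrices. $X=(x_1,\dots,x_n)$. *)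

(* Defs.v *)
From HB Require Import structures.
From mathcomp Require Import all_boot all_order all_algebra all_fingroup.
From mathcomp Require Import reals.
From mathcomp Require Import mpoly.
Set Implicit Arguments. Unset Strict Implicit. Unset Printing Implicit Defensive.
Import Order.TTheory GRing.Theory Num.Theory.
Local Open Scope ring_scope.

(* W_n : (W_n)_{ij} = 1/j for i <= j, 0 otherwise (1-based indices);
   with 0-based ordinals i j : 'I_n this is 1/(j+1) when i <= j. *)
Definition Wmx (R : realType) (n : nat) : 'M[R]_n :=
  \matrix_(i < n, j < n) (if (i <= j)%N then (j.+1%:R)^-1 else 0).

(* P_[k_1...k_n] = permutation matrix with 1 at (i, k_i):
   perm_mx s has entry (i,j) = (s i == j). *)
Definition Bmx (R : realType) (n : nat) (s : 'S_n) : 'M[R]_n :=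
  perm_mx s *m Wmx R n.

Definition PW (R : realType) (n : nat) : pred 'M[R]_n :=
  fun B => [exists s : 'S_n, B == @Bmx R n s].

Definition mxprod (R : realType) (n : nat) (l : seq 'M[R]_n) : 'M[R]_n :=
  foldr (fun A B => A *m B) 1%:M l.

(* F(A X^Tr): substitute x_i := sum_j A_{ij} x_j *)
Definition linsubst (R : realType) (n : nat) (A : 'M[R]_n) (F : {mpoly R[n]})
  : {mpoly R[n]} :=
  F \mPo [tuple \sum_(j < n) (A i j)%:MP * 'X_j | i < n].

Definition in_simplex (R : realType) (n : nat) (x : 'I_n -> R) : Prop :=
  (forall i, 0 <= x i) /\ \sum_(i < n) x i = 1.

(* Main.v *)
Require Import Defs.
From HB Require Import structures.
From mathcomp Require Import all_boot all_order all_algebra all_fingroup.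
From mathcomp Require Import reals.
From mathcomp Require Import mpoly.
From mathcomp Require Import ring lra.
From mathcomp Require boolp classical_sets topology normedtype matrix_normedtype derive.
Import Order.TTheory GRing.Theory Num.Theory.
Local Open Scope ring_scope.
Set Implicit Arguments. Unset Strict Implicit.

Section Nrm.
Variable R : realType.
Variable n : nat.
Implicit Types p q : {mpoly R[n]}.

Definition nrm p : R := \sum_(m <- msupp p) `|p@_m|.

Lemma nrm_sub p r : uniq r -> {subset msupp p <= r} ->
  nrm p = \sum_(m <- r) `|p@_m|.
Proof.
move=> ur sub; rewrite /nrm [RHS](bigID (mem (msupp p))) /=.
rewrite [X in _ + X]big1 ?addr0; last first.
  by move=> m /memN_msupp_eq0 ->; rewrite normr0.
rewrite [RHS]/= -[RHS]big_filter; apply: perm_big; apply: uniq_perm.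
- exact: msupp_uniq.
- exact: filter_uniq.
- by move=> m; rewrite mem_filter; case: (boolP (m \in msupp p)) => // /sub ->.
Qed.

Lemma nrm_ge0 p : 0 <= nrm p.
Proof. by apply: sumr_ge0 => m _. Qed.

Lemma coef_le_nrm p m : `|p@_m| <= nrm p.
Proof.
have [mi|mn] := boolP (m \in msupp p); last by rewrite memN_msupp_eq0 // normr0 nrm_ge0.
rewrite /nrm (bigD1_seq m mi (msupp_uniq p)) /= lerDl.
by apply: sumr_ge0 => i _.
Qed.

Lemma nrmD p q : nrm (p + q) <= nrm p + nrm q.
Proof.
pose r := undup (msupp p ++ msupp q ++ msupp (p + q)).
have ur : uniq r by apply: undup_uniq.
rewrite (@nrm_sub (p + q) r) ?(@nrm_sub p r) ?(@nrm_sub q r) //; first last.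
- by move=> m mi; rewrite mem_undup !mem_cat mi ?orbT.
- by move=> m mi; rewrite mem_undup !mem_cat mi ?orbT.
- by move=> m mi; rewrite mem_undup !mem_cat mi ?orbT.
rewrite -big_split /=; apply: ler_sum => m _; rewrite mcoeffD; exact: ler_normD.
Qed.

Lemma nrmN p : nrm (- p) = nrm p.
Proof.
pose r := undup (msupp p ++ msupp (- p)).
have ur : uniq r by apply: undup_uniq.
rewrite (@nrm_sub (- p) r) ?(@nrm_sub p r) //; first last.
- by move=> m mi; rewrite mem_undup !mem_cat mi ?orbT.
- by move=> m mi; rewrite mem_undup !mem_cat mi ?orbT.
by apply: eq_bigr => m _; rewrite mcoeffN normrN.
Qed.

Lemma nrmZ c p : nrm (c *: p) = `|c| * nrm p.
Proof.
rewrite (@nrm_sub (c *: p) (msupp p)) ?msupp_uniq //; last exact: msuppZ_le.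
rewrite /nrm mulr_sumr; apply: eq_bigr => m _; by rewrite mcoeffZ normrM.
Qed.

Lemma nrm0 : nrm 0 = 0.
Proof. by rewrite /nrm msupp0 big_nil. Qed.

Lemma nrm1 : nrm 1 = 1.
Proof. by rewrite /nrm msupp1 big_seq1 mcoeff1 eqxx normr1. Qed.

Lemma nrmX m : nrm 'X_[m] = 1.
Proof. by rewrite /nrm msuppX big_seq1 mcoeffX eqxx normr1. Qed.

Lemma nrm_sum (I : Type) (r : seq I) (F : I -> {mpoly R[n]}) :
  nrm (\sum_(i <- r) F i) <= \sum_(i <- r) nrm (F i).
Proof.
elim: r => [|a r IH]; first by rewrite !big_nil nrm0.
rewrite !big_cons; apply: le_trans (nrmD _ _) _; exact: lerD.
Qed.

Lemma nrmCX c j : nrm (c%:MP * 'X_j) = `|c|.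
Proof. by rewrite mul_mpolyC nrmZ nrmX mulr1. Qed.

Lemma nrmM p q : nrm (p * q) <= nrm p * nrm q.
Proof.
rewrite {1}(mpolyE p) {1}(mpolyE q) mulr_suml.
apply: le_trans (nrm_sum _ _) _.
rewrite /nrm mulr_suml; apply: ler_sum => a _.
rewrite mulr_sumr; apply: le_trans (nrm_sum _ _) _.
rewrite mulr_sumr; apply: ler_sum => b _.
rewrite -scalerAl -scalerAr scalerA -mpolyXD nrmZ nrmX mulr1 normrM.
by [].
Qed.

Lemma nrmXn p k : nrm (p ^+ k) <= nrm p ^+ k.
Proof.
elim: k => [|k IH]; first by rewrite !expr0 nrm1.
rewrite !exprS; apply: le_trans (nrmM _ _) _.
by apply: ler_wpM2l => //; exact: nrm_ge0.
Qed.

Lemma nrm_prod (I : Type) (r : seq I) (a : I -> {mpoly R[n]}) (K : I -> R) :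
  (forall i, nrm (a i) <= K i) -> nrm (\prod_(i <- r) a i) <= \prod_(i <- r) K i.
Proof.
move=> aK; elim: r => [|x r IH]; first by rewrite !big_nil nrm1.
rewrite !big_cons; apply: le_trans (nrmM _ _) _.
apply: ler_pM => //; [exact: nrm_ge0|exact: nrm_ge0].
Qed.

Lemma nrm_tele (I : Type) (r : seq I) (a b : I -> {mpoly R[n]}) (K e : I -> R) :
  (forall i, 1 <= K i) -> (forall i, nrm (a i) <= K i) -> (forall i, nrm (b i) <= K i) ->
  (forall i, nrm (a i - b i) <= e i) ->
  nrm (\prod_(i <- r) a i - \prod_(i <- r) b i) <= (\sum_(i <- r) e i) * \prod_(i <- r) K i.
Proof.
move=> K1 aK bK abe.
have K0 i : 0 <= K i by apply: le_trans (K1 i); exact: ler01.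
have e0 i : 0 <= e i by apply: le_trans (abe i); exact: nrm_ge0.
have PK0 (s : seq I) : 0 <= \prod_(i <- s) K i by apply: prodr_ge0.
elim: r => [|x r IH]; first by rewrite !big_nil subrr nrm0 mul0r.
rewrite !big_cons.
have -> : a x * \prod_(j <- r) a j - b x * \prod_(j <- r) b j =
  (a x - b x) * \prod_(j <- r) a j + b x * (\prod_(j <- r) a j - \prod_(j <- r) b j).
  by rewrite mulrBl mulrBr addrA subrK.
apply: le_trans (nrmD _ _) _.
have h1 : nrm ((a x - b x) * \prod_(j <- r) a j) <= e x * \prod_(j <- r) K j.
  apply: le_trans (nrmM _ _) _.
  apply: ler_pM; [exact: nrm_ge0|exact: nrm_ge0|exact: abe|exact: nrm_prod].
have h2 : nrm (b x * (\prod_(j <- r) a j - \prod_(j <- r) b j)) <=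
    K x * ((\sum_(i <- r) e i) * \prod_(i <- r) K i).
  apply: le_trans (nrmM _ _) _.
  apply: ler_pM; [exact: nrm_ge0|exact: nrm_ge0|exact: bK|exact: IH].
apply: le_trans (lerD h1 h2) _.
have S0 : 0 <= \sum_(i <- r) e i by apply: sumr_ge0.
set P := \prod_(i <- r) K i; set S := \sum_(i <- r) e i.
have P0 : 0 <= P := PK0 r.
have : e x * P <= e x * (K x * P).
  by rewrite -{1}(mul1r P) ler_wpM2l // ler_wpM2r.
nra.
Qed.

Lemma nrm_teleX (a b : {mpoly R[n]}) K e k :
  1 <= K -> nrm a <= K -> nrm b <= K -> nrm (a - b) <= e ->
  nrm (a ^+ k - b ^+ k) <= (k%:R * e) * K ^+ k.
Proof.
move=> K1 aK bK abe.
have E (c : {mpoly R[n]}) : c ^+ k = \prod_(t < k) c by rewrite prodr_const card_ord.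
rewrite !E; apply: le_trans (@nrm_tele 'I_k (index_enum 'I_k) (fun=> a) (fun=> b)
  (fun=> K) (fun=> e) (fun=> K1) (fun=> aK) (fun=> bK) (fun=> abe)) _.
by rewrite sumr_const prodr_const card_ord mulr_natl.
Qed.

End Nrm.


Section Mat.
Variable R : realType.
Variable n : nat.

Lemma count_le (j : 'I_n) (x : R) :
  \sum_(l < n) (if (l <= j)%N then x else 0) = j.+1%:R * x.
Proof.
rewrite -big_mkcond /=.
have -> : \sum_(l < n | (l <= j)%N) x = \sum_(l < n | (l < j.+1)%N) (fun=> x) l by [].
rewrite -(big_ord_widen n (fun=> x) (ltn_ord j)) sumr_const card_ord.
by rewrite mulr_natl.
Qed.

Lemma Bmx_E (s : 'S_n) i j : Bmx R s i j = Wmx R n (s i) j.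
Proof. by rewrite /Bmx -row_permE mxE. Qed.

Lemma perm_sum (s : 'S_n) (F : 'I_n -> R) : \sum_i F (s i) = \sum_i F i.
Proof. by rewrite [RHS](reindex_inj (@perm_inj _ s)). Qed.

Definition colstoch (A : 'M[R]_n) :=
  (forall i j, 0 <= A i j) /\ (forall j, \sum_i A i j = 1).

Lemma colstoch1 : colstoch 1%:M.
Proof.
split=> [i j|j]; first by rewrite mxE ler0n.
rewrite (bigD1 j) //= mxE eqxx big1 ?addr0 // => i /negbTE ij.
by rewrite mxE ij.
Qed.

Lemma colstochM A B : colstoch A -> colstoch B -> colstoch (A *m B).
Proof.
move=> [A0 A1] [B0 B1]; split=> [i j|j].
  by rewrite mxE; apply: sumr_ge0 => k _; apply: mulr_ge0.
rewrite -[RHS](B1 j).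
under eq_bigr do rewrite mxE.
rewrite exchange_big /=; apply: eq_bigr => k _.
by rewrite -mulr_suml A1 mul1r.
Qed.

Lemma colstochB s : colstoch (Bmx R s).
Proof.
split=> [i j|j].
  by rewrite Bmx_E mxE; case: ifP => _ //; rewrite invr_ge0 ler0n.
under eq_bigr do rewrite Bmx_E.
rewrite (perm_sum s (fun l => Wmx R n l j)).
under eq_bigr do rewrite mxE.
by rewrite count_le mulfV // pnatr_eq0.
Qed.

Lemma colstoch_le1 A i j : colstoch A -> A i j <= 1.
Proof.
move=> [A0 A1]; rewrite -(A1 j) (bigD1 i) //= lerDl.
by apply: sumr_ge0 => k _.
Qed.

Lemma colstoch_prod (l : seq 'M[R]_n) : all (@PW R n) l -> colstoch (mxprod l).
Proof.
elim: l => [|B l IH] /=; first by move=> _; exact: colstoch1.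
move=> /andP [/existsP [s /eqP ->] /IH H]; apply: colstochM => //; exact: colstochB.
Qed.

Definition spread (e : R) (A : 'M[R]_n) :=
  forall i j j', `|A i j - A i j'| <= e.

Lemma entryB (A : 'M[R]_n) s i j :
  (A *m Bmx R s) i j =
    (j.+1%:R)^-1 * \sum_k ((s k <= j)%N%:R * A i k).
Proof.
rewrite mxE mulr_sumr; apply: eq_bigr => k _.
rewrite Bmx_E mxE; case: ifP => _ /=; first by rewrite mul1r mulrC.
by rewrite mulr0 mul0r mulr0.
Qed.

Lemma countI (s : 'S_n) (j : 'I_n) : \sum_k ((s k <= j)%N%:R : R) = j.+1%:R.
Proof.
rewrite (perm_sum s (fun l => ((l <= j)%N%:R : R))).
have -> : \sum_(l < n) (((l <= j)%N)%:R : R) = \sum_(l < n) (if (l <= j)%N then 1 else 0).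
  by apply: eq_bigr => l _; case: ifP.
by rewrite count_le mulr1.
Qed.


Lemma dbl (w w' v : 'I_n -> R) :
  \sum_k \sum_l (w' k * w l * (v k - v l)) =
  (\sum_k w' k * v k) * (\sum_l w l) - (\sum_k w' k) * (\sum_l w l * v l).
Proof.
rewrite !mulr_suml -sumrB; apply: eq_bigr => k _.
rewrite !mulr_sumr -sumrB; apply: eq_bigr => l _; ring.
Qed.

Lemma spreadB e (A : 'M[R]_n) s : (0 < n)%N -> 0 <= e -> spread e A ->
  spread (e * (1 - n%:R^-1)) (A *m Bmx R s).
Proof.
move=> n0 e0 sA i.
suff H : forall j j' : 'I_n, (j <= j')%N ->
    `|(A *m Bmx R s) i j - (A *m Bmx R s) i j'| <= e * (1 - n%:R^-1).
  move=> j j'; case: (leqP j j') => h; first exact: H.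
  by rewrite distrC; apply: H; exact: ltnW.
move=> j j' jj; rewrite !entryB.
pose I := fun (j : 'I_n) (k : 'I_n) => ((s k <= j)%N%:R : R).
pose v := fun k => A i k.
pose X := \sum_k (I j k * v k).
pose Y := \sum_k (I j' k * v k).
pose a : R := j.+1%:R.
pose b : R := j'.+1%:R.
change (`|a^-1 * X - b^-1 * Y| <= e * (1 - n%:R^-1)).
have Ia : \sum_k I j k = a := countI s j.
have Ib : \sum_k I j' k = b := countI s j'.
have Ile k : I j k <= I j' k.
  rewrite /I; case: (leqP (s k) j) => h.
    by rewrite (leq_trans h jj).
  by rewrite ler0n.
have I0 j0 k : 0 <= I j0 k by rewrite /I ler0n.
pose T := \sum_k \sum_l ((I j' k - I j k) * I j l * (v k - v l)).
have TE : a * Y - b * X = T.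
  rewrite /T dbl Ia; rewrite sumrB.
  have -> : \sum_k (I j' k - I j k) * v k = Y - X.
    by rewrite /X /Y -sumrB; apply: eq_bigr => k _; rewrite mulrBl.
  rewrite Ib Ia -/X; ring.
have Tb : `|T| <= e * (b - a) * a.
  apply: le_trans (ler_norm_sum _ _ _) _.
  have -> : e * (b - a) * a = \sum_k \sum_l ((I j' k - I j k) * I j l * e).
    have -> : \sum_k \sum_l ((I j' k - I j k) * I j l * e) =
        (\sum_k (I j' k - I j k)) * (\sum_l I j l) * e.
      rewrite !mulr_suml; apply: eq_bigr => k _.
      rewrite mulr_sumr mulr_suml; apply: eq_bigr => l _; ring.
    by rewrite sumrB Ia Ib; ring.
  apply: ler_sum => k _; apply: le_trans (ler_norm_sum _ _ _) _.
  apply: ler_sum => l _; rewrite normrM ger0_norm.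
    apply: ler_wpM2l; last exact: sA.
    by apply: mulr_ge0; rewrite ?subr_ge0.
  by apply: mulr_ge0; rewrite ?subr_ge0.
have a1 : 1 <= a by rewrite /a ler1n.
have ab : a <= b by rewrite /a /b ler_nat.
have bn : b <= n%:R by rewrite /b ler_nat.
have a0 : a != 0 by rewrite /a pnatr_eq0.
have b0 : b != 0 by rewrite /b pnatr_eq0.
have DE : (a^-1 * X - b^-1 * Y) * (a * b) = - T.
  by rewrite -TE; field; rewrite !nat1r !pnatr_eq0.
set D := `|a^-1 * X - b^-1 * Y|.
have D0 : 0 <= D by rewrite /D normr_ge0.
have Dab : D * (a * b) <= e * (b - a) * a.
  by rewrite /D -(@ger0_norm _ (a * b)) ?mulr_ge0 // -?normrM DE normrN //; lra.
have Db : D * b <= e * (b - 1) by nra.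
pose ni : R := n%:R^-1.
have nni : n%:R * ni = 1 by rewrite /ni mulfV // pnatr_eq0 -lt0n.
have ni0 : 0 <= ni by rewrite /ni invr_ge0 ler0n.
have nib : ni * b <= 1 by rewrite -nni [n%:R * ni]mulrC; apply: ler_wpM2l.
have enib : e * (ni * b) <= e by rewrite -{2}(mulr1 e); apply: ler_wpM2l.
rewrite -/ni; nra.
Qed.

Lemma spread_mono e e' (A : 'M[R]_n) : e <= e' -> spread e A -> spread e' A.
Proof. by move=> ee sA i j j'; apply: le_trans (sA i j j') ee. Qed.

Lemma spread_prod (A : 'M[R]_n) e (l : seq 'M[R]_n) : (0 < n)%N -> 0 <= e ->
  spread e A -> all (@PW R n) l ->
  spread (e * n%:R / (n + size l)%:R) (A *m mxprod l).
Proof.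
move=> n0 e0; elim: l A e e0 => [|B l IH] A e e0 sA /=.
  rewrite addn0 mulfK ?pnatr_eq0 -?lt0n // mulmx1 //.
move=> /andP [/existsP [s /eqP ->] Hl].
rewrite mulmxA.
have n0R : 0 < n%:R :> R by rewrite ltr0n.
have c0 : 0 <= 1 - n%:R^-1 :> R.
  by rewrite subr_ge0 invf_le1 // ler1n.
have := IH (A *m Bmx R s) (e * (1 - n%:R^-1)) (mulr_ge0 e0 c0)
  (@spreadB e A s n0 e0 sA) Hl.
apply: spread_mono.
set k := size l.
rewrite -!mulrA; apply: ler_wpM2l => //.
have kn0 : 0 < (n + k)%:R :> R by rewrite ltr0n addn_gt0 n0.
have kn1 : 0 < (n + k.+1)%:R :> R by rewrite ltr0n addn_gt0 n0.
rewrite mulrA mulrBl mul1r mulVf ?gt_eqF // ler_pdivrMr // mulrAC ler_pdivlMr //.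
rewrite addnS -addn1 !natrD.
have k0 : 0 <= k%:R :> R by rewrite ler0n.
nra.
Qed.

End Mat.

Section SX.
Variable R : realType.
Variable n : nat.

Definition sX : {mpoly R[n]} := \sum_(j < n) 'X_j.

Lemma nonneg_mul (p q : {mpoly R[n]}) :
  (forall m, 0 <= p@_m) -> (forall m, 0 <= q@_m) -> forall m, 0 <= (p * q)@_m.
Proof.
move=> hp hq m; rewrite mcoeffM; apply: sumr_ge0 => k _; exact: mulr_ge0.
Qed.

Lemma sX_coef m : 0 <= sX@_m.
Proof.
rewrite /sX raddf_sum /=; apply: sumr_ge0 => j _; by rewrite mcoeffX ler0n.
Qed.

Lemma sXn_nonneg d m : 0 <= (sX ^+ d)@_m.
Proof.
elim: d m => [|d IH] m; first by rewrite expr0 mcoeff1 ler0n.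
rewrite exprS; apply: nonneg_mul => //; exact: sX_coef.
Qed.

Lemma sXn_pos d m : mdeg m = d -> 1 <= (sX ^+ d)@_m.
Proof.
elim: d m => [|d IH] m dm.
  have /eqP -> : m == 0%MM by rewrite -mdeg_eq0 dm.
  by rewrite expr0 mcoeff1 eqxx.
have [j Hj] : exists j, (0 < m j)%N.
  case: (pickP (fun j => 0 < m j)%N) => [j Hj|H]; first by exists j.
  exfalso; move: dm; rewrite mdegE big1 // => i _.
  by move: (H i) => /= /negbT; rewrite lt0n negbK => /eqP.
pose m' := (m - U_(j))%MM.
have Em : m = (U_(j) + m')%MM.
  rewrite addmC submK //; apply/mnm_lepP => i; rewrite mnm1E.
  by case: eqP => [<-|] //.
have dm' : mdeg m' = d.
  by move: dm; rewrite Em mdegD mdeg1 add1n => -[].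
rewrite exprSr /sX mulr_sumr raddf_sum /= (bigD1 j) //= Em mcoeffMX.
rewrite -[X in X <= _]addr0; apply: lerD; first exact: IH.
apply: sumr_ge0 => k _; apply: nonneg_mul; first exact: sXn_nonneg.
by move=> mm; rewrite mcoeffX ler0n.
Qed.

End SX.


Module Ana.
Import boolp classical_sets topology normedtype matrix_normedtype derive.
Import numFieldNormedType.Exports.
Local Open Scope classical_set_scope.

Section A.
Variable R : realType.

Lemma contM (T : topologicalType) (g h : T -> R) :
  continuous g -> continuous h -> continuous (fun x => g x * h x).
Proof. by move=> gc hc x; exact: (@continuousM _ _ g h x (gc x) (hc x)). Qed.
Lemma contD (T : topologicalType) (g h : T -> R) :
  continuous g -> continuous h -> continuous (fun x => g x + h x).
Proof. by move=> gc hc x; exact: (@continuousD _ _ _ g h x (gc x) (hc x)). Qed.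

Lemma cont_sum (T : topologicalType) (I : Type) (r : seq I) (g : I -> T -> R) :
  (forall i, continuous (g i)) -> continuous (fun x => \sum_(i <- r) g i x).
Proof.
move=> gc; elim: r => [|a r IH].
  have -> : (fun x : T => \sum_(i <- [::]) g i x) = (fun=> 0).
    by apply: funext => x; rewrite big_nil.
  exact: cst_continuous.
have -> : (fun x : T => \sum_(i <- a :: r) g i x) =
   (fun x => g a x + \sum_(i <- r) g i x).
  by apply: funext => x; rewrite big_cons.
by apply: contD; [exact: gc|exact: IH].
Qed.

Lemma cont_prod (T : topologicalType) (I : Type) (r : seq I) (g : I -> T -> R) :
  (forall i, continuous (g i)) -> continuous (fun x => \prod_(i <- r) g i x).
Proof.
move=> gc; elim: r => [|a r IH].
  have -> : (fun x : T => \prod_(i <- [::]) g i x) = (fun=> 1).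
    by apply: funext => x; rewrite big_nil.
  exact: cst_continuous.
have -> : (fun x : T => \prod_(i <- a :: r) g i x) =
   (fun x => g a x * \prod_(i <- r) g i x).
  by apply: funext => x; rewrite big_cons.
by apply: contM; [exact: gc|exact: IH].
Qed.

Lemma cont_exp (T : topologicalType) (g : T -> R) k :
  continuous g -> continuous (fun x => g x ^+ k).
Proof.
move=> gc; elim: k => [|k IH].
  have -> : (fun x : T => g x ^+ 0) = (fun=> 1) by apply: funext => x.
  exact: cst_continuous.
have -> : (fun x : T => g x ^+ k.+1) = (fun x => g x * g x ^+ k).
  by apply: funext => x; rewrite exprS.
by apply: contM; [exact: gc|exact: IH].
Qed.

Lemma simplex_pos_min n (F : {mpoly R[n]}) : (0 < n)%N ->
  (forall x : 'I_n -> R, in_simplex x -> 0 < F.@[x]) ->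
  exists2 e : R, 0 < e & forall x, in_simplex x -> e <= F.@[x].
Proof.
move=> n0 Fpos.
pose f := fun v : 'rV[R]_n => F.@[fun i => v ord0 i].
pose S := [set v : 'rV[R]_n | in_simplex (fun i => v ord0 i)].
have fc : continuous f.
  rewrite /f; have -> : (fun v : 'rV[R]_n => F.@[fun i => v ord0 i]) =
    (fun v => \sum_(m <- msupp F) F@_m * \prod_i (v ord0 i) ^+ m i).
    by apply: funext => v; rewrite mevalE.
  apply: cont_sum => m; apply: contM; first exact: cst_continuous.
  apply: cont_prod => i; apply: cont_exp; exact: coord_continuous.
have S0 : S !=set0.
  exists (\row_i ((i : nat) == 0%N)%:R); split.
    by move=> i; rewrite mxE ler0n.
  rewrite (bigD1 (Ordinal n0)) //= mxE eqxx big1 ?addr0 // => i Hi.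
  rewrite mxE; have -> : ((i : nat) == 0%N) = false; last by [].
  apply/negbTE/eqP => h; move/eqP: Hi; apply; exact: val_inj.
have Sc : compact S.
  apply: (@subclosed_compact _ _ [set v : 'rV[R]_n | forall i,
     (fun=> `[0, 1]%classic) i (v ord0 i)]).
  - have -> : S = (\bigcap_(i in setT) ((fun v : 'rV[R]_n => v ord0 i) @^-1`
        [set x | 0 <= x])) `&` ((fun v : 'rV[R]_n => \sum_i v ord0 i) @^-1` [set x | x = 1]).
      apply/seteqP; split => v.
        by move=> [H1 H2]; split => // i _; exact: H1.
      by move=> [H1 H2]; split => // i; exact: (H1 i I).
    apply: closedI.
      apply: closed_bigI => i _.
      apply: (proj1 (continuous_closedP (fun v : 'rV[R]_n => v ord0 i))).
        exact: coord_continuous.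
      exact: closed_ge.
    apply: (proj1 (continuous_closedP (fun v : 'rV[R]_n => \sum_i v ord0 i))).
      by apply: cont_sum => i; exact: coord_continuous.
    exact: closed_eq.
  - exact: (@rV_compact R n (fun=> `[0, 1]%classic) (fun=> @segment_compact R 0 1)).
  - move=> v [H1 H2] i /=; rewrite in_itv /= H1 /= -H2.
    rewrite (bigD1 i) //= lerDl; apply: sumr_ge0 => j _; exact: H1.
have [c cS cmin] := EVT_min_rV S0 Sc (continuous_subspaceT fc).
exists (f c).
  by apply: Fpos; move: cS; rewrite inE.
move=> x xS; have := cmin (\row_i x i); rewrite /f.
rewrite (@meval_eq _ _ (fun i => (\row_i0 x i0) ord0 i) x); last by move=> i; rewrite mxE.
apply; rewrite inE; split.
  by move=> i; rewrite mxE; case: xS.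
by rewrite -(proj2 xS); apply: eq_bigr => i _; rewrite mxE.
Qed.
End A.
End Ana.

Unset Implicit Arguments.

Lemma lin_nrm (R : realType) n (c : 'I_n -> R) :
  nrm (\sum_(j < n) (c j)%:MP * 'X_j : {mpoly R[n]}) <= \sum_j `|c j|.
Proof.
apply: le_trans (nrm_sum _ _) _; apply: ler_sum => j _; by rewrite nrmCX.
Qed.

Lemma powle (R : realType) (x y : R) k : 0 <= x -> x <= y -> x ^+ k <= y ^+ k.
Proof.
move=> x0 xy; apply: lerXn2r => //; rewrite qualifE //=; exact: le_trans xy.
Qed.

Theorem corollary4p1 (R : realType) (n d : nat) (F : {mpoly R[n]}) :
  (0 < n)%N ->
  F \is d.-homog ->
  (forall x : 'I_n -> R, in_simplex x -> 0 < F.@[x]) ->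
  exists M : nat, forall m : nat, (M <= m)%N ->
    forall Bs : seq 'M[R]_n, size Bs = m -> all (@PW R n) Bs ->
      forall mon : 'X_{1..n}, mdeg mon = d ->
        0 < (linsubst (mxprod Bs) F)@_mon.
Proof.
move=> n0 hF Fpos.
have [dl dl0 Fdl] := Ana.simplex_pos_min n0 Fpos.
pose K : R := n%:R.
have K1 : 1 <= K by rewrite /K ler1n.
have K0 : 0 <= K by apply: le_trans K1.
pose C : R := nrm F * (d%:R * K ^+ d * K ^+ d) * K.
have C0 : 0 <= C.
  by rewrite /C; apply: mulr_ge0 => //; apply: mulr_ge0; [exact: nrm_ge0|
    rewrite !mulr_ge0 ?ler0n ?exprn_ge0].
have [M HM] : exists M : nat, C * K < dl * M%:R.
  have x0 : 0 <= C * K / dl by apply: divr_ge0; [apply: mulr_ge0 | apply: ltW].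
  exists (Num.Def.archi_bound (C * K / dl)).
  by rewrite -ltr_pdivrMl // mulrC; exact: archi_boundP.
exists M => m Mm Bs sz allPW mon dm.
set Q := mxprod Bs.
have cs : colstoch Q := colstoch_prod allPW.
pose sb : R := K / (n + m)%:R.
have nm0 : 0 < (n + m)%:R :> R by rewrite ltr0n addn_gt0 n0.
have sp : spread sb Q.
  have s1 : spread 1 (1%:M : 'M[R]_n).
    move=> i j j'; rewrite !mxE.
    by case: (i == j); case: (i == j'); rewrite ?subrr ?normr0 ?subr0 ?sub0r ?normrN ?normr1.
  have := spread_prod n0 ler01 s1 allPW.
  by rewrite mul1mx mul1r sz.
pose j0 : 'I_n := Ordinal n0.
pose p := fun i => Q i j0.
have ps : in_simplex p.
  by split => [i|]; [exact: cs.1 | exact: cs.2].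
have Qle1 i j : `|Q i j| <= 1 by rewrite ger0_norm ?(cs.1) // colstoch_le1.
pose P0 : 'M[R]_n := \matrix_(i, j) p i.
pose tQ := [tuple \sum_(j < n) (Q i j)%:MP * 'X_j | i < n] : n.-tuple {mpoly R[n]}.
pose tP := [tuple \sum_(j < n) (P0 i j)%:MP * 'X_j | i < n] : n.-tuple {mpoly R[n]}.
have homF : {in msupp F, forall m, mdeg m = d} := dhomog_mf hF.
have HE : linsubst P0 F = (F.@[p])%:MP * sX R n ^+ d.
  rewrite /linsubst comp_mpolyE mevalE rmorph_sum mulr_suml.
  apply: eq_big_seq => mm mmF.
  have -> : \prod_(i < n) tnth [tuple \sum_(j < n) (P0 i j)%:MP * 'X_j | i < n] i ^+ mm i
      = \prod_(i < n) ((p i ^+ mm i)%:MP * sX R n ^+ mm i).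
    apply: eq_bigr => i _; rewrite tnth_mktuple.
    under eq_bigr do rewrite mxE.
    by rewrite -mulr_sumr exprMn rmorphXn.
  rewrite big_split /= -rmorph_prod prodrXr -mdegE homF //.
  by rewrite -mul_mpolyC mulrA -rmorphM.
have GH : nrm (linsubst Q F - linsubst P0 F) <= C * sb.
  rewrite /linsubst !comp_mpolyE -sumrB.
  under eq_bigr do rewrite -scalerBr.
  apply: le_trans (nrm_sum _ _) _.
  rewrite /C -!mulrA [nrm F]/nrm mulr_suml; rewrite !big_seq; apply: ler_sum => mm mmF.
  rewrite nrmZ; apply: ler_wpM2l => //.
  pose eta := K * sb.
  have sb0 : 0 <= sb by rewrite /sb divr_ge0 // ltW.
  have eta0 : 0 <= eta by rewrite mulr_ge0.
  have LQ i : nrm (tnth tQ i) <= K.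
    rewrite tnth_mktuple; apply: le_trans (@lin_nrm _ _ _) _.
    apply: le_trans (ler_sum _ (fun j _ => Qle1 i j)) _.
    by rewrite sumr_const card_ord.
  have LP i : nrm (tnth tP i) <= K.
    rewrite tnth_mktuple; apply: le_trans (@lin_nrm _ _ _) _.
    under eq_bigr do rewrite mxE.
    apply: le_trans (ler_sum _ (fun j _ => Qle1 i j0)) _.
    by rewrite sumr_const card_ord.
  have LQP i : nrm (tnth tQ i - tnth tP i) <= eta.
    rewrite !tnth_mktuple -sumrB.
    under eq_bigr do rewrite -mulrBl -rmorphB mxE.
    apply: le_trans (@lin_nrm _ _ _) _.
    apply: le_trans (ler_sum _ (fun j _ => sp i j j0)) _.
    by rewrite sumr_const card_ord /eta /K mulr_natl.
  have Ki i : 1 <= K ^+ mm i by exact: exprn_ege1.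
  have := @nrm_tele R n 'I_n (index_enum 'I_n) (fun i => tnth tQ i ^+ mm i)
    (fun i => tnth tP i ^+ mm i) (fun i => K ^+ mm i)
    (fun i => ((mm i)%:R * eta) * K ^+ mm i) Ki
    (fun i => le_trans (nrmXn _ _) (@powle _ _ _ _ (nrm_ge0 _) (LQ i)))
    (fun i => le_trans (nrmXn _ _) (@powle _ _ _ _ (nrm_ge0 _) (LP i)))
    (fun i => nrm_teleX (mm i) K1 (LQ i) (LP i) (LQP i)).
  move/le_trans; apply.
  rewrite prodrXr -mdegE homF //.
  have mle i : (mm i <= d)%N.
    by rewrite -(homF mm mmF) mdegE (bigD1 i) //= leq_addr.
  have : \sum_i (mm i)%:R * eta * K ^+ mm i <= \sum_i (mm i)%:R * eta * K ^+ d.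
    apply: ler_sum => i _; apply: ler_wpM2l; first by rewrite mulr_ge0.
    exact: ler_weXn2l.
  rewrite -mulr_suml -mulr_suml -natr_sum -mdegE homF // => h.
  apply: le_trans (ler_wpM2r (exprn_ge0 _ K0) h) _.
  rewrite /eta; have -> : d%:R * (K * sb) * K ^+ d * K ^+ d = d%:R * (K ^+ d * (K ^+ d * (K * sb))) by ring.
  exact: lexx.
have ->: (linsubst Q F)@_mon = (linsubst P0 F)@_mon + (linsubst Q F - linsubst P0 F)@_mon.
  by rewrite mcoeffB addrC subrK.
rewrite HE mcoeffCM.
have h1 : dl <= F.@[p] * (sX R n ^+ d)@_mon.
  rewrite -[dl]mulr1; apply: ler_pM => //; [exact: ltW | exact: Fdl | exact: sXn_pos].
have h2 : - (C * sb) <= (linsubst Q F - linsubst P0 F)@_mon.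
  rewrite lerNl; apply: le_trans (ler_norm _) _; rewrite normrN.
  exact: le_trans (coef_le_nrm _ _) GH.
have h3 : C * sb < dl.
  rewrite /sb mulrA ltr_pdivrMr //.
  apply: lt_le_trans HM _; apply: ler_wpM2l; first exact: ltW.
  by rewrite ler_nat (leq_trans Mm) // leq_addl.
move: h2; rewrite HE => h2; have := lerD h1 h2; lra.
Qed.
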